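(* Let $A,B$ be set-germs at $0\in\mathbb{R}^n$ with $0\in\overline{A}\cap\overline{B}$ and $D(A)\subseteq D(B)$. If $A$ satisfies condition (WSSP)-relative to $B$, then $A$ satisfies condition (SSP)-relative to $B$. Hence the relative conditions (SSP) and (WSSP) are equivalent.
   Context: For a set-germ $A\subset\mathbb{R}^n$ at $0$ with $0\in\overline A$, $D(A)=\{a\in S^{n-1}:\exists\, x_i\in A\setminus\{0\},\ x_i\to0,\ x_i/\|x_i\|\to a\}$. For sequences, $\|u_m\|\ll\|v_m\|,\|w_m\|$ means $\|u_m\|/\|v_m\|\to0$ and $\|u_m\|/\|w_m\|\to0$. $A$ satisfies condition (SSP)-relative to $B$ if for every sequence $a_m\in B$ tending to $0$ with $\lim a_m/\|a_m\|\in D(A)$ there is a sequence $b_m\in A$ with $\|a_m-b_m\|\ll\|a_m\|,\|b_m\|$. $A$ satisfies condition (WSSP)-relative to $B$ if for every sequence $a_m\in B$ tending to $0$ with $\lim a_m/\|a_m\|\in D(A)$ there is a subsequence $(m_j)$ and points $b_{m_j}\in A$ with $\|a_{m_j}-b_{m_j}\|\ll\|a_{m_j}\|,\|b_{m_j}\|$ as $j\to\infty$. *)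

(* Defs.v *)
From HB Require Import structures.
From mathcomp Require Import all_boot all_order all_algebra.
From mathcomp Require Import all_classical all_reals all_analysis.
Set Implicit Arguments. Unset Strict Implicit. Unset Printing Implicit Defensive.
Import Order.TTheory GRing.Theory Num.Theory.
Import numFieldNormedType.Exports.
Local Open Scope classical_set_scope.
Local Open Scope ring_scope.

Section Germs.
Variables (R : realType) (n : nat).
Notation V := 'rV[R]_n.

Definition enorm (x : V) : R := Num.sqrt (\sum_(i < n) (x ord0 i) ^+ 2).

Definition normalize (x : V) : V := (enorm x)^-1 *: x.

Definition tends0 (x : nat -> V) : Prop :=
  (fun m => enorm (x m)) @ \oo --> (0 : R).

Definition tendsto (x : nat -> V) (a : V) : Prop :=
  (fun m => enorm (x m - a)) @ \oo --> (0 : R).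

Definition Dir (A : set V) : set V :=
  [set a | enorm a = 1 /\
     exists x : nat -> V, (forall i, A (x i) /\ x i != 0) /\
       tends0 x /\ tendsto (normalize \o x) a].

(* ||u_m|| << ||v_m|| : ||u_m|| / ||v_m|| -> 0, written without division *)
Definition llt (u v : nat -> V) : Prop :=
  forall eps : R, 0 < eps -> \forall m \near \oo, enorm (u m) <= eps * enorm (v m).

(* admissible sequences a_m in B (a_m <> 0 so that a_m/||a_m|| makes sense) *)
Definition adm (A B : set V) (a : nat -> V) : Prop :=
  (forall m, B (a m) /\ a m != 0) /\ tends0 a /\
  exists d, Dir A d /\ tendsto (normalize \o a) d.

Definition SSP_rel (A B : set V) : Prop :=
  forall a : nat -> V, adm A B a ->
    exists b : nat -> V, (forall m, A (b m)) /\
      llt (fun m => a m - b m) a /\ llt (fun m => a m - b m) b.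

Definition WSSP_rel (A B : set V) : Prop :=
  forall a : nat -> V, adm A B a ->
    exists (mj : nat -> nat) (b : nat -> V),
      (forall j, (mj j < mj j.+1)%N) /\ (forall j, A (b j)) /\
      llt (fun j => a (mj j) - b j) (a \o mj) /\ llt (fun j => a (mj j) - b j) b.

End Germs.

(* Main.v *)
Require Import Defs.
From HB Require Import structures.
From mathcomp Require Import all_boot all_order all_algebra.
From mathcomp Require Import all_classical all_reals all_analysis.
Import Order.TTheory GRing.Theory Num.Theory.
Import numFieldNormedType.Exports.
Local Open Scope classical_set_scope.
Local Open Scope ring_scope.

Fixpoint phiseq (c : nat -> nat) (k : nat) : nat :=
  match k with 0 => c 0%N | k'.+1 => c (phiseq c k').+1 end.

Lemma phiseq_inc c : (forall N, (N <= c N)%N) -> forall k, (phiseq c k < phiseq c k.+1)%N.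
Proof. by move=> Hc k /=; apply: Hc. Qed.

Lemma inc_ge (f : nat -> nat) : (forall k, (f k < f k.+1)%N) -> forall k, (k <= f k)%N.
Proof. move=> Hf; elim=> // k IH; exact: (ssrnat.leq_ltn_trans IH (Hf k)). Qed.

Lemma inc_cvg (f : nat -> nat) : (forall k, (f k < f k.+1)%N) -> f @ \oo --> \oo.
Proof.
move=> Hf P [N _ PN]; exists N => // k /= Hk; apply: PN.
rewrite /=; exact: (ssrnat.leq_trans Hk (@inc_ge f Hf k)).
Qed.

Lemma sub_cvg0 {R : realType} (u : nat -> R) (f : nat -> nat) :
  (forall k, (f k < f k.+1)%N) -> u @ \oo --> (0:R) -> (u \o f) @ \oo --> (0:R).
Proof. move=> Hf Hu; apply: cvg_comp Hu; exact: inc_cvg. Qed.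

Lemma near_ex (P : nat -> Prop) : (\forall m \near \oo, P m) -> exists m, P m.
Proof. move=> [N _ HN]; exists N; apply: HN; exact: ssrnat.leqnn. Qed.

Lemma not_near (P : nat -> Prop) : ~ (\forall m \near \oo, P m) ->
  exists f : nat -> nat, (forall k, (f k < f k.+1)%N) /\ forall k, ~ P (f k).
Proof.
move=> NP.
have H : forall N, exists m, (N <= m)%N /\ ~ P m.
  move=> N; apply: contrapT => Hn; apply: NP; exists N => // m /= Hm.
  apply: contrapT => Pm; apply: Hn; by exists m.
have [c Hc] := choice H.
exists (phiseq c); split; first by apply: phiseq_inc => N; case: (Hc N).
by case=> [|k] /=; [case: (Hc 0%N) | case: (Hc (phiseq c k).+1)].
Qed.

Section Main.
Variables (R : realType) (n : nat).
Notation V := 'rV[R]_n.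

Lemma enorm_ge0 (x : V) : 0 <= enorm x.
Proof. exact: sqrtr_ge0. Qed.

Definition Qp (a : nat -> V) (m : nat) (b : V) (e : R) :=
  enorm (a m - b) <= e * enorm (a m) /\ enorm (a m - b) <= e * enorm b.

Lemma Qp_mono a m b e1 e2 : Qp a m b e1 -> e1 <= e2 -> Qp a m b e2.
Proof.
move=> [H1 H2] he; split.
  by apply: (le_trans H1); apply: ler_wpM2r => //; apply: enorm_ge0.
by apply: (le_trans H2); apply: ler_wpM2r => //; apply: enorm_ge0.
Qed.

Lemma ev_lemma (A B : set V) (a : nat -> V) :
  WSSP_rel A B -> adm A B a -> forall e : R, 0 < e ->
  \forall m \near \oo, exists b, A b /\ Qp a m b e.
Proof.
move=> W [Hab [Ht [d [Hd Hdt]]]] e he.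
apply: contrapT => NP.
have [f [Hf Hnf]] := @not_near (fun m => exists b, A b /\ Qp a m b e) NP.
have Hadm : adm A B (a \o f).
  split; first by move=> m; exact: Hab.
  split; first exact: (@sub_cvg0 R (fun m => enorm (a m)) f Hf Ht).
  exists d; split => //.
  exact: (@sub_cvg0 R _ f Hf Hdt).
have [mj [b [_ [HA [H1 H2]]]]] := W _ Hadm.
have [N1 _ HN1] := H1 e he.
have [N2 _ HN2] := H2 e he.
apply: (Hnf (mj (maxn N1 N2))); exists (b (maxn N1 N2)); split => //.
split.
  by apply: (HN1 (maxn N1 N2)); rewrite /= leq_maxl.
by apply: (HN2 (maxn N1 N2)); rewrite /= leq_maxr.
Qed.

Lemma build_b (A : set V) (a : nat -> V) (x0 : V) : A x0 ->
  forall m, exists b, A b /\ forall k, (k <= m)%N ->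
    (exists b', A b' /\ Qp a m b' (k.+1%:R^-1)) -> Qp a m b (k.+1%:R^-1).
Proof.
move=> Ax0 m.
suff: forall j, exists b, A b /\ forall k, (k <= j)%N ->
    (exists b', A b' /\ Qp a m b' (k.+1%:R^-1)) -> Qp a m b (k.+1%:R^-1).
  by move=> /(_ m).
elim=> [|j [b [Ab IH]]].
  case: (pselect (exists b', A b' /\ Qp a m b' (1%:R^-1))) => [[b' [Ab' Hb']]|Nb].
    exists b'; split => // k; rewrite leqn0 => /eqP -> _; exact: Hb'.
  exists x0; split => // k; rewrite leqn0 => /eqP -> Hk; by case: (Nb Hk).
case: (pselect (exists b', A b' /\ Qp a m b' (j.+2%:R^-1))) => [[b' [Ab' Hb']]|Nb].
  exists b'; split => // k Hk _; apply: (@Qp_mono _ _ _ _ _ Hb').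
  rewrite lef_pV2 ?posrE ?ltr0n // ler_nat; by [].
exists b; split => // k; rewrite leq_eqVlt => /orP [/eqP ->|Hk] Hex.
  by case: (Nb Hex).
exact: IH.
Qed.

End Main.
Arguments Qp {R n}.
Arguments Qp_mono {R n a m b e1 e2}.
Arguments ev_lemma {R n A B a}.

Lemma wssp_ssp (R : realType) (n : nat) (A B : set 'rV[R]_n) :
  closure A 0 -> WSSP_rel A B -> SSP_rel A B.
Proof.
move=> HA W a Ha.
have [x0 [Ax0 _]] := HA _ (@filterT _ (nbhs (0 : 'rV[R]_n)) _).
have [bs Hbs] := choice (@build_b R n A a x0 Ax0).
exists bs; split; first by move=> m; case: (Hbs m).
have key : forall eps : R, 0 < eps -> \forall m \near \oo, Qp a m (bs m) eps.
  move=> eps he.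
  have [K HK] := @near_ex (fun k => (k.+1%:R : R)^-1 < eps) (@near_infty_natSinv_lt R (PosNum he)).
  have hK : 0 < (K.+1%:R : R)^-1 by rewrite invr_gt0 ltr0n.
  have [N _ HN] := ev_lemma W Ha _ hK.
  exists (maxn N K) => // m /= Hm.
  move: Hm; rewrite geq_max => /andP [HmN HmK].
  apply: (Qp_mono _ (ltW HK)).
  apply: (proj2 (Hbs m)) => //; exact: HN.
split => eps he; apply: filterS (key eps he) => m [] //.
Qed.

Theorem proposition2p7 (R : realType) (n : nat) (A B : set 'rV[R]_n) :
  closure A 0 -> closure B 0 -> Dir A `<=` Dir B ->
  (WSSP_rel A B -> SSP_rel A B) /\ (SSP_rel A B <-> WSSP_rel A B).
Proof.
move=> HA _ _; split; first exact: wssp_ssp.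
split; last exact: wssp_ssp.
move=> S a Ha; have [b [Hb [H1 H2]]] := S a Ha.
by exists id, b.
Qed.
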